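(* Let $S\subset\mathbf R^4$ be an oriented immersed surface and let $\Gamma=(\Gamma_1,\Gamma_2):S\to \mathbf S^2\times\mathbf S^2$ be its Gauss map in sphere (Klein) coordinates. Then $S$ is congruent (i.e. mapped by a rigid motion of $\mathbf R^4$, a composition of a translation and an orthogonal linear map) to a Lagrangean surface of $(\mathbf R^4,\omega)$, $\omega=\mathrm dx\wedge \mathrm du+\mathrm dy\wedge\mathrm dv$, if and only if the image of $\Gamma_1$ or the image of $\Gamma_2$ is contained in a great circle of $\mathbf S^2$.
   Context: Coordinates on $\mathbf R^4$ are $(x,y,u,v)$ with standard orthonormal basis $e_1,e_2,e_3,e_4$. A Lagrangean surface of $(\mathbf R^4,\omega)$ is an immersed surface $L$ with $i^*\omega\equiv 0$, $i$ the immersion. For an oriented plane $P$ spanned by an oriented orthonormal pair $v_1=\sum c_ie_i$, $v_2=\sum d_ie_i$, its Plücker coordinates are $p_{ij}=c_id_j-c_jd_i$, so that $P=(p_{12},p_{13},p_{14},p_{34},p_{42},p_{23})\in\mathbf S^5\subset\mathbf R^6$ (note $p_{42}=-p_{24}$). Its Klein (sphere) coordinates are $a=(p_{12}+p_{34},\,p_{13}+p_{42},\,p_{14}+p_{23})$ and $b=(p_{12}-p_{34},\,p_{13}-p_{42},\,p_{14}-p_{23})$, both unit vectors in $\mathbf R^3$, giving $G_{2,4}\cong\mathbf S^2\times\mathbf S^2$. The Gauss map sends $p\in S$ to the oriented tangent plane $T_pS$ (translated to the origin); $\Gamma_1(p)=a(T_pS)$, $\Gamma_2(p)=b(T_pS)$.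 A great circle of $\mathbf S^2$ is its intersection with a plane through the origin. *)

(* Defs.v *)
From HB Require Import structures.
From mathcomp Require Import all_boot all_order all_algebra.
From mathcomp Require Import all_classical all_reals all_analysis.
Set Implicit Arguments. Unset Strict Implicit. Unset Printing Implicit Defensive.
Import Order.TTheory GRing.Theory Num.Theory.
Import numFieldNormedType.Exports.
Local Open Scope classical_set_scope.
Local Open Scope ring_scope.

Section Defs.
Variable R : realType.

(* Points of R^4 are row vectors 'rV[R]_4; coordinates (x,y,u,v) are the
   entries with indices 0,1,2,3 (so e_1..e_4 correspond to indices 0..3). *)
Definition crd (w : 'rV[R]_4) (i : nat) : R := w ord0 (inord i).

Definition dot4 (w z : 'rV[R]_4) : R := \sum_(i < 4) w ord0 i * z ord0 i.
Definition norm4 (w : 'rV[R]_4) : R := Num.sqrt (dot4 w w).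

Definition e2 (k : 'I_2) : 'rV[R]_2 := \row_(j < 2) (if j == k then 1 else 0).

Record spatch := SPatch { pdom : set 'rV[R]_2 ; pmap : 'rV[R]_2 -> 'rV[R]_4 }.

Definition dpart (f : 'rV[R]_2 -> 'rV[R]_4) (p : 'rV[R]_2) (k : 'I_2) : 'rV[R]_4 :=
  'D_(e2 k) f p.

Definition immersed_patch (P : spatch) : Prop :=
  open (pdom P) /\
  forall p, pdom P p ->
    differentiable (pmap P) p /\
    row_free (col_mx (dpart (pmap P) p ord0) (dpart (pmap P) p (lift ord0 ord0))).

(* An oriented immersed surface is described by a family of oriented
   immersed local parametrizations (an oriented atlas of the immersion). *)
Definition oriented_immersed_surface (I : Type) (S : I -> spatch) : Prop :=
  forall i, immersed_patch (S i).

Definition tv1 (f : 'rV[R]_2 -> 'rV[R]_4) p : 'rV[R]_4 :=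
  (norm4 (dpart f p ord0))^-1 *: dpart f p ord0.
Definition tv2 (f : 'rV[R]_2 -> 'rV[R]_4) p : 'rV[R]_4 :=
  let t2 := dpart f p (lift ord0 ord0) in
  let w := t2 - dot4 t2 (tv1 f p) *: tv1 f p in
  (norm4 w)^-1 *: w.

(* Pluecker coordinates p_ij = c_i d_j - c_j d_i (1-based indices i,j) *)
Definition plk (v1 v2 : 'rV[R]_4) (i j : nat) : R :=
  crd v1 i.-1 * crd v2 j.-1 - crd v1 j.-1 * crd v2 i.-1.

(* Klein (sphere) coordinates a and b of the oriented plane spanned by the
   oriented orthonormal pair (v1,v2). Note p_42 = plk _ _ 4 2. *)
Definition klein_a (v1 v2 : 'rV[R]_4) : 'rV[R]_3 :=
  \row_(k < 3) [:: plk v1 v2 1 2 + plk v1 v2 3 4;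
                   plk v1 v2 1 3 + plk v1 v2 4 2;
                   plk v1 v2 1 4 + plk v1 v2 2 3]`_k.
Definition klein_b (v1 v2 : 'rV[R]_4) : 'rV[R]_3 :=
  \row_(k < 3) [:: plk v1 v2 1 2 - plk v1 v2 3 4;
                   plk v1 v2 1 3 - plk v1 v2 4 2;
                   plk v1 v2 1 4 - plk v1 v2 2 3]`_k.

Definition Gamma1 (P : spatch) (p : 'rV[R]_2) : 'rV[R]_3 :=
  klein_a (tv1 (pmap P) p) (tv2 (pmap P) p).
Definition Gamma2 (P : spatch) (p : 'rV[R]_2) : 'rV[R]_3 :=
  klein_b (tv1 (pmap P) p) (tv2 (pmap P) p).

Definition gauss_image (G : spatch -> 'rV[R]_2 -> 'rV[R]_3)
  (I : Type) (S : I -> spatch) : set 'rV[R]_3 :=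
  [set y | exists i p, pdom (S i) p /\ y = G (S i) p].

Definition dot3 (w z : 'rV[R]_3) : R := \sum_(i < 3) w ord0 i * z ord0 i.

Definition sphere2 : set 'rV[R]_3 := [set y | dot3 y y = 1].
Definition great_circle (n : 'rV[R]_3) : set 'rV[R]_3 :=
  sphere2 `&` [set y | dot3 n y = 0].
Definition contained_in_great_circle (A : set 'rV[R]_3) : Prop :=
  exists n : 'rV[R]_3, n != 0 /\ A `<=` great_circle n.

Definition omega (X Y : 'rV[R]_4) : R :=
  (crd X 0 * crd Y 2 - crd X 2 * crd Y 0) + (crd X 1 * crd Y 3 - crd X 3 * crd Y 1).

Definition lagrangean_surface (I : Type) (S : I -> spatch) : Prop :=
  forall i p, pdom (S i) p ->
    omega (dpart (pmap (S i)) p ord0) (dpart (pmap (S i)) p (lift ord0 ord0)) = 0.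

Definition orthogonal_mx (A : 'M[R]_4) : Prop := A *m A^T = 1%:M.

Definition move_patch (A : 'M[R]_4) (c : 'rV[R]_4) (P : spatch) : spatch :=
  SPatch (pdom P) (fun p => pmap P p *m A + c).

Definition congruent_to_lagrangean (I : Type) (S : I -> spatch) : Prop :=
  exists (A : 'M[R]_4) (c : 'rV[R]_4), orthogonal_mx A /\
    lagrangean_surface (fun i => move_patch A c (S i)).

End Defs.

(* Main.v *)
Require Import Defs.
From HB Require Import structures.
From mathcomp Require Import all_boot all_order all_algebra.
From mathcomp Require Import all_classical all_reals all_analysis.
From mathcomp Require Import ring lra.
Set Implicit Arguments. Unset Strict Implicit. Unset Printing Implicit Defensive.
Import Order.TTheory GRing.Theory Num.Theory.
Import numFieldNormedType.Exports.
Local Open Scope classical_set_scope.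
Local Open Scope ring_scope.

Section Aux.
Variable R : realType.
Implicit Types (X Y w z : 'rV[R]_4) (A : 'M[R]_4).

Lemma sum4 (F : 'I_4 -> R) :
  \sum_(i < 4) F i = F (inord 0) + F (inord 1) + F (inord 2) + F (inord 3).
Proof.
rewrite !big_ord_recl big_ord0 addr0 !addrA.
by congr (_ + _ + _ + _); congr F; apply/val_inj; rewrite /= inordK.
Qed.

Lemma sum3 (F : 'I_3 -> R) :
  \sum_(i < 3) F i = F (inord 0) + F (inord 1) + F (inord 2).
Proof.
rewrite !big_ord_recl big_ord0 addr0 !addrA.
by congr (_ + _ + _); congr F; apply/val_inj; rewrite /= inordK.
Qed.

Lemma dot4E w z : dot4 w z = crd w 0 * crd z 0 + crd w 1 * crd z 1
   + crd w 2 * crd z 2 + crd w 3 * crd z 3.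
Proof. by rewrite /dot4 sum4. Qed.

Lemma crdZ a w i : crd (a *: w) i = a * crd w i.
Proof. by rewrite /crd mxE. Qed.
Lemma crdD w z i : crd (w + z) i = crd w i + crd z i.
Proof. by rewrite /crd mxE. Qed.
Lemma crdB w z i : crd (w - z) i = crd w i - crd z i.
Proof. by rewrite /crd !mxE. Qed.
Lemma crdM w A k : crd (w *m A) k = crd w 0 * A (inord 0) (inord k)
  + crd w 1 * A (inord 1) (inord k) + crd w 2 * A (inord 2) (inord k)
  + crd w 3 * A (inord 3) (inord k).
Proof. by rewrite /crd mxE sum4. Qed.
Lemma crd_row A i k : crd (row (inord i) A) k = A (inord i) (inord k).
Proof. by rewrite /crd mxE. Qed.

Lemma kleinaE (v1 v2 : 'rV[R]_4) (k : nat) : (k < 3)%N -> klein_a v1 v2 ord0 (inord k) =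
  [:: plk v1 v2 1 2 + plk v1 v2 3 4; plk v1 v2 1 3 + plk v1 v2 4 2;
      plk v1 v2 1 4 + plk v1 v2 2 3]`_k.
Proof. by move=> hk; rewrite mxE inordK. Qed.
Lemma kleinbE (v1 v2 : 'rV[R]_4) (k : nat) : (k < 3)%N -> klein_b v1 v2 ord0 (inord k) =
  [:: plk v1 v2 1 2 - plk v1 v2 3 4; plk v1 v2 1 3 - plk v1 v2 4 2;
      plk v1 v2 1 4 - plk v1 v2 2 3]`_k.
Proof. by move=> hk; rewrite mxE inordK. Qed.

Lemma dot3E (m y : 'rV[R]_3) : dot3 m y = m ord0 (inord 0) * y ord0 (inord 0)
  + m ord0 (inord 1) * y ord0 (inord 1) + m ord0 (inord 2) * y ord0 (inord 2).
Proof. by rewrite /dot3 sum3. Qed.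

Lemma dot3_klein_a (m : 'rV[R]_3) (v1 v2 : 'rV[R]_4) : dot3 m (klein_a v1 v2) =
  m ord0 (inord 0) * (plk v1 v2 1 2 + plk v1 v2 3 4)
  + m ord0 (inord 1) * (plk v1 v2 1 3 + plk v1 v2 4 2)
  + m ord0 (inord 2) * (plk v1 v2 1 4 + plk v1 v2 2 3).
Proof. by rewrite dot3E !kleinaE. Qed.
Lemma dot3_klein_b (m : 'rV[R]_3) (v1 v2 : 'rV[R]_4) : dot3 m (klein_b v1 v2) =
  m ord0 (inord 0) * (plk v1 v2 1 2 - plk v1 v2 3 4)
  + m ord0 (inord 1) * (plk v1 v2 1 3 - plk v1 v2 4 2)
  + m ord0 (inord 2) * (plk v1 v2 1 4 - plk v1 v2 2 3).
Proof. by rewrite dot3E !kleinbE. Qed.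

Lemma klein_a_norm (v1 v2 : 'rV[R]_4) : dot3 (klein_a v1 v2) (klein_a v1 v2) =
  dot4 v1 v1 * dot4 v2 v2 - dot4 v1 v2 ^+ 2.
Proof. rewrite dot3_klein_a !kleinaE // !dot4E /plk /=; ring. Qed.
Lemma klein_b_norm (v1 v2 : 'rV[R]_4) : dot3 (klein_b v1 v2) (klein_b v1 v2) =
  dot4 v1 v1 * dot4 v2 v2 - dot4 v1 v2 ^+ 2.
Proof. rewrite dot3_klein_b !kleinbE // !dot4E /plk /=; ring. Qed.

Lemma klein_a_scale a b c X Y :
  klein_a (a *: X) (b *: (Y - c *: X)) = (a * b) *: klein_a X Y.
Proof.
apply/matrixP => i j; rewrite !mxE /plk !crdZ !crdB !crdZ.
case: j => [[|[|[|//]]] hj] /=; ring.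
Qed.
Lemma klein_b_scale a b c X Y :
  klein_b (a *: X) (b *: (Y - c *: X)) = (a * b) *: klein_b X Y.
Proof.
apply/matrixP => i j; rewrite !mxE /plk !crdZ !crdB !crdZ.
case: j => [[|[|[|//]]] hj] /=; ring.
Qed.

Lemma dot4Z a b w z : dot4 (a *: w) (b *: z) = a * b * dot4 w z.
Proof. rewrite !dot4E !crdZ; ring. Qed.
Lemma dot4C w z : dot4 w z = dot4 z w.
Proof. rewrite !dot4E; ring. Qed.
Lemma dot4_proj u Y : dot4 u (Y - dot4 Y u *: u) = dot4 u Y - dot4 Y u * dot4 u u.
Proof. rewrite [in LHS]dot4E !crdB !crdZ !dot4E; ring. Qed.

Lemma dot4_ge0 w : 0 <= dot4 w w.
Proof. by rewrite /dot4; apply: sumr_ge0 => i _; rewrite -expr2 sqr_ge0. Qed.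

Lemma dot4_eq0 w : dot4 w w = 0 -> w = 0.
Proof.
move=> h; apply/matrixP => i j; rewrite mxE (ord1 i).
have := @psumr_eq0P R _ xpredT (fun j => w ord0 j * w ord0 j).
move=> /(_ (fun j _ => ltac:(by rewrite -expr2 sqr_ge0)) h j isT).
by move/eqP; rewrite mulf_eq0 orbb => /eqP.
Qed.

Lemma norm4_sq w : norm4 w ^+ 2 = dot4 w w.
Proof. by rewrite /norm4 sqr_sqrtr // dot4_ge0. Qed.

Lemma norm4_neq0 w : w != 0 -> norm4 w != 0.
Proof.
move=> hw; apply/eqP => h; move: hw; rewrite (dot4_eq0 (w := w)) ?eqxx //.
by rewrite -norm4_sq h expr0n.
Qed.

Lemma unitv w : w != 0 -> dot4 ((norm4 w)^-1 *: w) ((norm4 w)^-1 *: w) = 1.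
Proof.
move=> hw; rewrite dot4Z -norm4_sq; have := norm4_neq0 hw => h.
by field.
Qed.

Lemma rowfree2 X Y : row_free (col_mx X Y) ->
  forall a b, a *: X + b *: Y = 0 -> a = 0 /\ b = 0.
Proof.
move=> hf a b h.
have := @row_free_inj _ 1 _ _ _ hf (row_mx a%:M b%:M) 0.
rewrite mul_row_col !mul_scalar_mx mul0mx => /(_ h) /eqP.
rewrite -row_mx0 => /eqP /eq_row_mx [] /matrixP /(_ ord0 ord0) + /matrixP /(_ ord0 ord0).
rewrite !mxE /= !mulr1n => -> ->; done.
Qed.


Lemma patch_facts (f : 'rV[R]_2 -> 'rV[R]_4) p :
  row_free (col_mx (dpart f p ord0) (dpart f p (lift ord0 ord0))) ->
  exists2 k : R, k != 0 &
   [/\ klein_a (tv1 f p) (tv2 f p) = k *: klein_a (dpart f p ord0) (dpart f p (lift ord0 ord0)),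
       klein_b (tv1 f p) (tv2 f p) = k *: klein_b (dpart f p ord0) (dpart f p (lift ord0 ord0)),
       dot3 (klein_a (tv1 f p) (tv2 f p)) (klein_a (tv1 f p) (tv2 f p)) = 1 &
       dot3 (klein_b (tv1 f p) (tv2 f p)) (klein_b (tv1 f p) (tv2 f p)) = 1].
Proof.
set X := dpart f p ord0; set Y := dpart f p (lift ord0 ord0) => hf.
have hX : X != 0.
  apply/eqP => hX0; have [] := rowfree2 hf (a := 1) (b := 0).
    by rewrite hX0 scaler0 scale0r addr0.
  by move/eqP; rewrite oner_eq0.
set u := tv1 f p.
have hu : u = (norm4 X)^-1 *: X by [].
set c := dot4 Y u.
set w := Y - c *: u.
have hw : tv2 f p = (norm4 w)^-1 *: w by [].
have hw2 : w = Y - (c * (norm4 X)^-1) *: X by rewrite /w hu scalerA.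
have wn0 : w != 0.
  apply/eqP => hw0; have [] := rowfree2 hf (a := - (c * (norm4 X)^-1)) (b := 1).
    by rewrite scale1r scaleNr addrC -hw2 hw0.
  by move=> _ /eqP; rewrite oner_eq0.
have uu : dot4 u u = 1 by rewrite hu unitv.
have uw : dot4 u w = 0 by rewrite /w dot4_proj uu mulr1 dot4C subrr.
have t22 : dot4 (tv2 f p) (tv2 f p) = 1 by rewrite hw unitv.
have t12 : dot4 u (tv2 f p) = 0.
  by rewrite hw -[u]scale1r dot4Z uw mulr0.
exists ((norm4 X)^-1 * (norm4 w)^-1).
  by rewrite mulf_neq0 // invr_eq0 norm4_neq0.
split.
- by rewrite hw hw2 {1}hu klein_a_scale.
- by rewrite hw hw2 {1}hu klein_b_scale.
- by rewrite klein_a_norm -/u uu t22 t12 expr0n /= subr0 mulr1.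
- by rewrite klein_b_norm -/u uu t22 t12 expr0n /= subr0 mulr1.
Qed.

End Aux.
Section Der.
Variable R : realType.

Lemma dpart_move (f : 'rV[R]_2 -> 'rV[R]_4) (A : 'M[R]_4) c p k :
  differentiable f p -> dpart (fun q => f q *m A + c) p k = dpart f p k *m A.
Proof.
move=> hd; rewrite /dpart; set v := e2 R k.
have df : derivable f p v by exact: diff_derivable.
have dfe : forall j, derivable (fun t => f t ord0 j) p v.
  by move=> j; exact: ((derivable_mxP f p v).1 df ord0 j).
have heq : forall i j, (fun t => (f t *m A + c) i j) =
   (\sum_(l < 4) (fun t => f t ord0 l * A l j)) + cst (c i j).
  move=> i j; apply/funext => t; rewrite (ord1 i) !mxE fct_sumE /=.
  by [].
have dl : forall l j, derivable (fun t => f t ord0 l * A l j) p v.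
  by move=> l j; exact: (derivableM (dfe l) (derivable_cst (A l j) p v)).
have dg : derivable (fun q => f q *m A + c) p v.
  apply/derivable_mxP => i j; rewrite heq; apply: derivableD.
    by apply: derivable_sum => l; exact: dl.
  exact: derivable_cst.
rewrite (derive_mx dg) (derive_mx df); apply/matrixP => i j.
rewrite !mxE heq deriveD; last exact: derivable_cst.
  rewrite derive_cst addr0 derive_sum; last by move=> l; exact: dl.
  apply: eq_bigr => l _; rewrite mxE.
  rewrite (deriveM (dfe l) (derivable_cst (A l j) p v)).
  by rewrite derive_cst scaler0 add0r (ord1 i) /= mulrC.
by apply: derivable_sum => l; exact: dl.
Qed.
End Der.
Section Alg.
Variable R : realType.
Implicit Types (X Y w z : 'rV[R]_4) (A : 'M[R]_4).

Definition Kf A (i j : nat) : R := omega (row (inord i) A) (row (inord j) A).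
Definition svec A : 'rV[R]_3 := \row_(k < 3)
  [:: (Kf A 0 1 + Kf A 2 3) / 2; (Kf A 0 2 - Kf A 1 3) / 2; (Kf A 0 3 + Kf A 1 2) / 2]`_k.
Definition tvec A : 'rV[R]_3 := \row_(k < 3)
  [:: (Kf A 0 1 - Kf A 2 3) / 2; (Kf A 0 2 + Kf A 1 3) / 2; (Kf A 0 3 - Kf A 1 2) / 2]`_k.

Lemma omega_move X Y A : omega (X *m A) (Y *m A) =
  dot3 (svec A) (klein_a X Y) + dot3 (tvec A) (klein_b X Y).
Proof.
rewrite /omega !crdM dot3_klein_a dot3_klein_b /svec /tvec !mxE !inordK //.
rewrite /Kf /omega !crd_row /plk /=; field; done.
Qed.

Definition Jm : 'M[R]_4 := \matrix_(i < 4, j < 4)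
  nth 0 (nth [::] ([:: [:: 0; 0; 1; 0]; [:: 0; 0; 0; 1]; [:: -1; 0; 0; 0]; [:: 0; -1; 0; 0]] : seq (seq R)) i) j.

Lemma mx4P (M N : 'M[R]_4) :
  (forall i j, (i < 4)%N -> (j < 4)%N -> M (inord i) (inord j) = N (inord i) (inord j)) ->
  M = N.
Proof.
move=> h; apply/matrixP => i j; have := h i j (ltn_ord i) (ltn_ord j).
by rewrite !inord_val.
Qed.

Lemma inord_eq4 (a b : nat) : (a < 4)%N -> (b < 4)%N ->
  (inord a == inord b :> 'I_4) = (a == b).
Proof. by move=> ha hb; rewrite -val_eqE /= !inordK. Qed.

Lemma JJt : Jm *m Jm^T = 1%:M.
Proof.
apply: mx4P => i j hi hj; rewrite !mxE sum4 !mxE !inordK // inord_eq4 //.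
by case: i hi => [|[|[|[|//]]]] _; case: j hj => [|[|[|[|//]]]] _ /=;
  rewrite ?mul0r ?mul1r ?mulr0 ?mulrN ?mulNr ?opprK ?add0r ?addr0 ?mulr1.
Qed.

Lemma KE A (i j : nat) : (i < 4)%N -> (j < 4)%N ->
  (A *m Jm *m A^T) (inord i) (inord j) = Kf A i j.
Proof.
move=> hi hj; rewrite !mxE sum4 !mxE !sum4 !mxE !inordK //=.
rewrite /Kf /omega !crd_row; ring.
Qed.


Lemma KKt_entries (K : 'M[R]_4) : K *m K^T = 1%:M -> forall i j, (i < 4)%N -> (j < 4)%N ->
  K (inord i) (inord 0) * K (inord j) (inord 0) + K (inord i) (inord 1) * K (inord j) (inord 1)
  + K (inord i) (inord 2) * K (inord j) (inord 2) + K (inord i) (inord 3) * K (inord j) (inord 3)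
  = (i == j)%:R.
Proof.
move=> hK i j hi hj; have := congr1 (fun M : 'M[R]_4 => M (inord i) (inord j)) hK.
by rewrite /= !mxE sum4 !mxE inord_eq4.
Qed.

Lemma KA A (i j : nat) : Kf A j i = - Kf A i j.
Proof. rewrite /Kf /omega; ring. Qed.
Lemma K0 A (i : nat) : Kf A i i = 0.
Proof. rewrite /Kf /omega; ring. Qed.

Lemma KKt A : A *m A^T = 1%:M ->
  (A *m Jm *m A^T) *m (A *m Jm *m A^T)^T = 1%:M.
Proof.
move=> hA; have hA' := mulmx1C hA.
rewrite !trmx_mul trmxK !mulmxA -(mulmxA _ A^T A) hA' mulmx1.
by rewrite -(mulmxA _ Jm Jm^T) JJt mulmx1 hA.
Qed.

Lemma row3_eq0 (v : 'rV[R]_3) : v ord0 (inord 0) = 0 -> v ord0 (inord 1) = 0 ->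
  v ord0 (inord 2) = 0 -> v = 0.
Proof.
move=> h0 h1 h2; apply/matrixP => i j; rewrite (ord1 i) mxE.
have -> : j = inord j by rewrite inord_val.
by case: j => [[|[|[|//]]] hj] /=.
Qed.

Lemma orth_st A : A *m A^T = 1%:M ->
  (svec A = 0 /\ tvec A != 0) \/ (tvec A = 0 /\ svec A != 0).
Proof.
move=> hA; have E := KKt_entries (KKt hA).
have E' : forall i j, (i < 4)%N -> (j < 4)%N ->
  Kf A i 0 * Kf A j 0 + Kf A i 1 * Kf A j 1 + Kf A i 2 * Kf A j 2 + Kf A i 3 * Kf A j 3
   = (i == j)%:R.
  by move=> i j hi hj; rewrite -!KE // E.
have e00 := E' 0 0 isT isT; have e11 := E' 1 1 isT isT; have e22 := E' 2 2 isT isT.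
have e33 := E' 3 3 isT isT; have e01 := E' 0 1 isT isT; have e02 := E' 0 2 isT isT.
have e03 := E' 0 3 isT isT; have e12 := E' 1 2 isT isT; have e13 := E' 1 3 isT isT.
have e23 := E' 2 3 isT isT.
move: e00 e11 e22 e33 e01 e02 e03 e12 e13 e23.
rewrite (KA A 0 1) (KA A 0 2) (KA A 0 3) (KA A 1 2) (KA A 1 3) (KA A 2 3) !K0 /=.
set k01 := Kf A 0 1; set k02 := Kf A 0 2; set k03 := Kf A 0 3.
set k12 := Kf A 1 2; set k13 := Kf A 1 3; set k23 := Kf A 2 3.
move=> e00 e11 e22 e33 e01 e02 e03 e12 e13 e23.
have sv : forall k, (k < 3)%N -> svec A ord0 (inord k) =
  [:: (k01 + k23) / 2; (k02 - k13) / 2; (k03 + k12) / 2]`_k.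
  by move=> k hk; rewrite mxE inordK.
have tv : forall k, (k < 3)%N -> tvec A ord0 (inord k) =
  [:: (k01 - k23) / 2; (k02 + k13) / 2; (k03 - k12) / 2]`_k.
  by move=> k hk; rewrite mxE inordK.
set s1 := (k01 + k23) / 2; set s2 := (k02 - k13) / 2; set s3 := (k03 + k12) / 2.
set t1 := (k01 - k23) / 2; set t2 := (k02 + k13) / 2; set t3 := (k03 - k12) / 2.
have f11 : s1 * t1 = 0 by rewrite /s1 /t1; lra.
have f12 : s1 * t2 = 0 by rewrite /s1 /t2; lra.
have f13 : s1 * t3 = 0 by rewrite /s1 /t3; lra.
have f21 : s2 * t1 = 0 by rewrite /s2 /t1; lra.
have f22 : s2 * t2 = 0 by rewrite /s2 /t2; lra.
have f23 : s2 * t3 = 0 by rewrite /s2 /t3; lra.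
have f31 : s3 * t1 = 0 by rewrite /s3 /t1; lra.
have f32 : s3 * t2 = 0 by rewrite /s3 /t2; lra.
have f33 : s3 * t3 = 0 by rewrite /s3 /t3; lra.
have ssum : s1 * s1 + s2 * s2 + s3 * s3 + t1 * t1 + t2 * t2 + t3 * t3 = 1.
  by rewrite /s1 /s2 /s3 /t1 /t2 /t3; lra.
have tent : tvec A = 0 -> [/\ t1 = 0, t2 = 0 & t3 = 0].
  move=> ht; split.
  - by have := congr1 (fun v : 'rV[R]_3 => v ord0 (inord 0)) ht; rewrite tv // mxE.
  - by have := congr1 (fun v : 'rV[R]_3 => v ord0 (inord 1)) ht; rewrite tv // mxE.
  - by have := congr1 (fun v : 'rV[R]_3 => v ord0 (inord 2)) ht; rewrite tv // mxE.
have sent : svec A = 0 -> [/\ s1 = 0, s2 = 0 & s3 = 0].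
  move=> ht; split.
  - by have := congr1 (fun v : 'rV[R]_3 => v ord0 (inord 0)) ht; rewrite sv // mxE.
  - by have := congr1 (fun v : 'rV[R]_3 => v ord0 (inord 1)) ht; rewrite sv // mxE.
  - by have := congr1 (fun v : 'rV[R]_3 => v ord0 (inord 2)) ht; rewrite sv // mxE.
case: (boolP [&& s1 == 0, s2 == 0 & s3 == 0]) => [/and3P[/eqP h1 /eqP h2 /eqP h3] | hn].
  left; split; first by apply: row3_eq0; rewrite sv.
  apply/eqP => /tent [g1 g2 g3]; move: ssum; rewrite h1 h2 h3 g1 g2 g3.
  by rewrite !mulr0 !addr0 => /eqP; rewrite eq_sym oner_eq0.
have key : forall t, s1 * t = 0 -> s2 * t = 0 -> s3 * t = 0 -> t = 0.
  move=> t a b c; rewrite !negb_and in hn; case/or3P: hn => h.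
  - by move/eqP: a; rewrite mulf_eq0 (negbTE h) => /eqP.
  - by move/eqP: b; rewrite mulf_eq0 (negbTE h) => /eqP.
  - by move/eqP: c; rewrite mulf_eq0 (negbTE h) => /eqP.
right; split.
  by apply: row3_eq0; rewrite tv //; apply: key.
apply/eqP => /sent [g1 g2 g3]; move: hn; rewrite g1 g2 g3 eqxx.
done.
Qed.
End Alg.
Section Cons.
Variable R : realType.

Definition Amat (rho s q0 q1 q2 q3 : R) : 'M[R]_4 := \matrix_(i < 4, j < 4)
  (rho * nth 0 (nth [::] ([:: [:: q0; q1; q2; q3]; [:: - q1; q0; - q3; q2];
     [:: - q2; q3; q0; - q1]; [:: - s * q3; - s * q2; s * q1; s * q0]] : seq (seq R)) i) j).

Definition Tq (q0 q1 q2 q3 : R) : 'rV[R]_3 := \row_(k < 3)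
  [:: 2 * (q1 * q2 - q0 * q3); q0 ^+ 2 + q2 ^+ 2 - q1 ^+ 2 - q3 ^+ 2; 2 * (q0 * q1 + q2 * q3)]`_k.
Definition Tq' (q0 q1 q2 q3 : R) : 'rV[R]_3 := \row_(k < 3)
  [:: 2 * (q1 * q2 - q0 * q3); q0 ^+ 2 + q2 ^+ 2 - q1 ^+ 2 - q3 ^+ 2; - (2 * (q0 * q1 + q2 * q3))]`_k.

Lemma Amat_orth (rho s q0 q1 q2 q3 : R) : s * s = 1 ->
  rho * rho * (q0 ^+ 2 + q1 ^+ 2 + q2 ^+ 2 + q3 ^+ 2) = 1 ->
  Amat rho s q0 q1 q2 q3 *m (Amat rho s q0 q1 q2 q3)^T = 1%:M.
Proof.
move=> hs hN; apply: mx4P => i j hi hj.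
rewrite !mxE sum4 !mxE !inordK // inord_eq4 //.
case: i hi => [|[|[|[|//]]]] _; case: j hj => [|[|[|[|//]]]] _ /=;
  first [ring | rewrite -hN; ring | rewrite -hN -[X in _ = _ * X]mul1r -hs; ring].
Qed.

Lemma Amat_s (rho s q0 q1 q2 q3 : R) :
  svec (Amat rho s q0 q1 q2 q3) = (rho * rho * ((1 - s) / 2)) *: Tq' q0 q1 q2 q3.
Proof.
apply/matrixP => i j; rewrite (ord1 i); have -> : j = inord j by rewrite inord_val.
rewrite !mxE /Kf /omega !crd_row !mxE !inordK //.
case: j => [[|[|[|//]]] hj] /=; field; done.
Qed.

Lemma Amat_t (rho s q0 q1 q2 q3 : R) :
  tvec (Amat rho s q0 q1 q2 q3) = (rho * rho * ((1 + s) / 2)) *: Tq q0 q1 q2 q3.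
Proof.
apply/matrixP => i j; rewrite (ord1 i); have -> : j = inord j by rewrite inord_val.
rewrite !mxE /Kf /omega !crd_row !mxE !inordK //.
case: j => [[|[|[|//]]] hj] /=; field; done.
Qed.


Lemma sq2_eq0 (a b : R) : a ^+ 2 + b ^+ 2 = 0 -> a = 0 /\ b = 0.
Proof.
move=> h; have ha := sqr_ge0 a; have hb := sqr_ge0 b.
have h1 : a ^+ 2 = 0 by lra.
have h2 : b ^+ 2 = 0 by lra.
by split; apply/eqP; rewrite -sqrf_eq0; apply/eqP.
Qed.

Lemma exq (m1 m2 m3 : R) : ~ (m1 = 0 /\ m2 = 0 /\ m3 = 0) ->
  exists q0 q1 q2 q3 mu : R, [/\ q0 ^+ 2 + q1 ^+ 2 + q2 ^+ 2 + q3 ^+ 2 != 0, mu != 0,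
    2 * (q1 * q2 - q0 * q3) = mu * m1,
    q0 ^+ 2 + q2 ^+ 2 - q1 ^+ 2 - q3 ^+ 2 = mu * m2 &
    2 * (q0 * q1 + q2 * q3) = mu * m3].
Proof.
move=> hm.
have hpos : 0 <= m1 ^+ 2 + m2 ^+ 2 + m3 ^+ 2.
  by rewrite !addr_ge0 ?sqr_ge0.
set r := Num.sqrt (m1 ^+ 2 + m2 ^+ 2 + m3 ^+ 2).
have hr : r ^+ 2 = m1 ^+ 2 + m2 ^+ 2 + m3 ^+ 2 by rewrite sqr_sqrtr.
case: (eqVneq (m2 + r) 0) => h.
- have hm2 : m2 = - r by lra.
  have h13 : m1 ^+ 2 + m3 ^+ 2 = 0.
    by move: hr; rewrite hm2 sqrrN => hr'; lra.
  have [h1 h3] := sq2_eq0 h13.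
  have m2n0 : m2 != 0.
    apply/eqP => h2; apply: hm; split => //.
  exists 1, 0, 0, 0, m2^-1; split.
  + by rewrite expr1n !expr0n /= !addr0 oner_eq0.
  + by rewrite invr_eq0.
  + by rewrite h1; ring.
  + by rewrite mulVf //; ring.
  + by rewrite h3; ring.
- exists 0, m1, (m2 + r), m3, (2 * (m2 + r)); split.
  + have h1 : 0 < (m2 + r) ^+ 2 by rewrite lt0r sqr_ge0 sqrf_eq0 h.
    have := sqr_ge0 m1; have := sqr_ge0 m3.
    move=> a b; apply/eqP; rewrite expr0n /=; lra.
  + by rewrite mulf_neq0 // pnatr_eq0.
  + ring.
  + rewrite expr0n /=; lra.
  + ring.
Qed.


Lemma rho_prop (N : R) : 0 <= N -> N != 0 ->
  (Num.sqrt N)^-1 * (Num.sqrt N)^-1 * N = 1 /\ (Num.sqrt N)^-1 != 0.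
Proof.
move=> h0 hN; have hs : Num.sqrt N != 0 by rewrite sqrtr_eq0 -ltNge lt0r hN.
split; last by rewrite invr_eq0.
rewrite -{3}(sqr_sqrtr h0); field; done.
Qed.

Lemma exA (n : 'rV[R]_3) (g : bool) : n != 0 ->
  exists A : 'M[R]_4, A *m A^T = 1%:M /\ exists2 lam : R, lam != 0 &
   (if g then svec A = 0 /\ tvec A = lam *: n else tvec A = 0 /\ svec A = lam *: n).
Proof.
move=> hn.
have hn' : ~ (n ord0 (inord 0) = 0 /\ n ord0 (inord 1) = 0 /\ n ord0 (inord 2) = 0).
  by move=> [a [b c]]; move: hn; rewrite (row3_eq0 a b c) eqxx.
have hn'' : ~ (n ord0 (inord 0) = 0 /\ n ord0 (inord 1) = 0 /\ - n ord0 (inord 2) = 0).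
  by move=> [a [b /eqP]]; rewrite oppr_eq0 => /eqP c; apply: hn'.
case: g.
- have [q0 [q1 [q2 [q3 [mu [hN hmu e1 e2 e3]]]]]] := exq hn'.
  have hN0 : 0 <= q0 ^+ 2 + q1 ^+ 2 + q2 ^+ 2 + q3 ^+ 2 by rewrite !addr_ge0 ?sqr_ge0.
  have [hrho hr0] := rho_prop hN0 hN.
  set rho := (Num.sqrt _)^-1 in hrho hr0.
  exists (Amat rho 1 q0 q1 q2 q3); split; first by apply: Amat_orth; rewrite ?mulr1.
  exists (rho * rho * mu); first by rewrite !mulf_neq0.
  split; first by rewrite Amat_s subrr mul0r mulr0 scale0r.
  rewrite Amat_t; apply/matrixP => i j; rewrite (ord1 i).
  have -> : j = inord j by rewrite inord_val.
  rewrite !mxE !inordK //.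
  case: j => [[|[|[|//]]] hj] /=.
  + rewrite e1; field; done.
  + rewrite e2; field; done.
  + rewrite e3; field; done.
- have [q0 [q1 [q2 [q3 [mu [hN hmu e1 e2 e3]]]]]] := exq hn''.
  have hN0 : 0 <= q0 ^+ 2 + q1 ^+ 2 + q2 ^+ 2 + q3 ^+ 2 by rewrite !addr_ge0 ?sqr_ge0.
  have [hrho hr0] := rho_prop hN0 hN.
  set rho := (Num.sqrt _)^-1 in hrho hr0.
  exists (Amat rho (-1) q0 q1 q2 q3); split.
    by apply: Amat_orth; rewrite ?mulrNN ?mulr1.
  exists (rho * rho * mu); first by rewrite !mulf_neq0.
  split; first by rewrite Amat_t subrr mul0r mulr0 scale0r.
  rewrite Amat_s; apply/matrixP => i j; rewrite (ord1 i).
  have -> : j = inord j by rewrite inord_val.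
  rewrite !mxE !inordK //.
  case: j => [[|[|[|//]]] hj] /=.
  + rewrite e1; field; done.
  + rewrite e2; field; done.
  + rewrite e3; field; done.
Qed.

End Cons.

Lemma dot3Zr (R : realType) (m y : 'rV[R]_3) k : dot3 m (k *: y) = k * dot3 m y.
Proof. rewrite !dot3E !mxE; ring. Qed.
Lemma dot3Zl (R : realType) (m y : 'rV[R]_3) k : dot3 (k *: m) y = k * dot3 m y.
Proof. rewrite !dot3E !mxE; ring. Qed.
Lemma dot30 (R : realType) (y : 'rV[R]_3) : dot3 0 y = 0.
Proof. rewrite !dot3E !mxE; ring. Qed.

Theorem mainTheorem1 (R : realType) (I : Type) (S : I -> spatch R) :
  oriented_immersed_surface S ->
  (congruent_to_lagrangean S <->
     (contained_in_great_circle (gauss_image (@Gamma1 R) S) \/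
      contained_in_great_circle (gauss_image (@Gamma2 R) S))).
Proof.
move=> hS.
have pt : forall i p, Defs.pdom (S i) p ->
  differentiable (Defs.pmap (S i)) p /\
  exists2 k : R, k != 0 &
   [/\ Gamma1 (S i) p = k *: klein_a (dpart (Defs.pmap (S i)) p ord0) (dpart (Defs.pmap (S i)) p (lift ord0 ord0)),
       Gamma2 (S i) p = k *: klein_b (dpart (Defs.pmap (S i)) p ord0) (dpart (Defs.pmap (S i)) p (lift ord0 ord0)),
       dot3 (Gamma1 (S i) p) (Gamma1 (S i) p) = 1 &
       dot3 (Gamma2 (S i) p) (Gamma2 (S i) p) = 1].
  move=> i p hp; have [_ /(_ p hp) [hd hf]] := hS i; split => //.
  exact: patch_facts hf.
have mv : forall (A : 'M[R]_4) c i p, Defs.pdom (S i) p ->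
  omega (dpart (Defs.pmap (move_patch A c (S i))) p ord0)
        (dpart (Defs.pmap (move_patch A c (S i))) p (lift ord0 ord0)) =
  dot3 (svec A) (klein_a (dpart (Defs.pmap (S i)) p ord0) (dpart (Defs.pmap (S i)) p (lift ord0 ord0)))
  + dot3 (tvec A) (klein_b (dpart (Defs.pmap (S i)) p ord0) (dpart (Defs.pmap (S i)) p (lift ord0 ord0))).
  move=> A c i p hp; have [hd _] := pt i p hp.
  by rewrite /= !dpart_move // omega_move.
split.
- case=> A [c [hA hL]].
  case: (orth_st hA) => [[hs ht] | [ht hs]].
  + right; exists (tvec A); split => // y [i [p [hp ->]]].
    have [_ [k kn0 [_ e2 _ u2]]] := pt i p hp.
    split => //=; rewrite e2 dot3Zr.
    have := hL i p hp; rewrite mv // hs dot30 add0r => ->.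
    by rewrite mulr0.
  + left; exists (svec A); split => // y [i [p [hp ->]]].
    have [_ [k kn0 [e1 _ u1 _]]] := pt i p hp.
    split => //=; rewrite e1 dot3Zr.
    have := hL i p hp; rewrite mv // ht dot30 addr0 => ->.
    by rewrite mulr0.
- case=> [[n [hn hsub]] | [n [hn hsub]]].
  + have [A [hA [lam lam0 [ht hs]]]] := exA false hn.
    exists A, 0; split => // i p hp.
    rewrite mv // ht hs dot30 addr0 dot3Zl.
    have [_ [k kn0 [e1 _ _ _]]] := pt i p hp.
    have [_ /=] := hsub (Gamma1 (S i) p) (ex_intro _ i (ex_intro _ p (conj hp erefl))).
    rewrite e1 dot3Zr => /eqP; rewrite mulf_eq0 (negbTE kn0) /= => /eqP ->.
    by rewrite mulr0.
  + have [A [hA [lam lam0 [hs ht]]]] := exA true hn.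
    exists A, 0; split => // i p hp.
    rewrite mv // ht hs dot30 add0r dot3Zl.
    have [_ [k kn0 [_ e2 _ _]]] := pt i p hp.
    have [_ /=] := hsub (Gamma2 (S i) p) (ex_intro _ i (ex_intro _ p (conj hp erefl))).
    rewrite e2 dot3Zr => /eqP; rewrite mulf_eq0 (negbTE kn0) /= => /eqP ->.
    by rewrite mulr0.
Qed.
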